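(* The matrix $$R_\Omega=\begin{pmatrix}q&0&0&0\\0&q&q-q^{-1}&0\\0&0&q^{-1}&0\\0&0&0&-q^{-1}\end{pmatrix}$$ is superizable with $p(1)=0$, $p(2)=1$, and the super FRT bialgebra $A(\underline R_\Omega)$ of $\underline R_\Omega^a{}_c{}^b{}_d=(-1)^{p(a)p(b)}(R_\Omega)^a{}_c{}^b{}_d$ is the super-bialgebra generated by $1$ and $\mathbf u=\begin{pmatrix}\alpha&\beta\\\gamma&\delta\end{pmatrix}$, $\alpha,\delta$ even and $\beta,\gamma$ odd, with relations $\beta\alpha=\alpha\beta$, $\gamma\alpha=q^2\alpha\gamma$, $\delta\beta=\beta\delta$, $\delta\gamma=q^{-2}\gamma\delta$, $\gamma\beta=-q^2\beta\gamma$, $\delta\alpha-\alpha\delta=(1-q^2)\beta\gamma$, $\beta^2=\gamma^2=0$, and matrix super-coproduct $\underline\Delta\mathbf u=\mathbf u\otimes\mathbf u$, $\underline\varepsilon(\mathbf u)=\mathrm{id}$. If $\alpha,\delta$ are made invertible, one obtains a super-quantum group $GL^\Omega_q(1|1)$ with antipode $\underline S(\mathbf u)=\begin{pmatrix}\alpha^{-1}+\alpha^{-1}\beta\delta^{-1}\gamma\alpha^{-1}&-\alpha^{-1}\beta\delta^{-1}\\-\delta^{-1}\gamma\alpha^{-1}&\delta^{-1}+\delta^{-1}\gamma\alpha^{-1}\beta\delta^{-1}\end{pmatrix}$, and the super-determinant $\underline{\det}(\mathbf u)=\alpha\delta^{-1}-\beta\delta^{-1}\gamma\delta^{-1}$ is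 a central, even, group-like element.
   Context: $4\times4$ matrices have entries $R^a{}_c{}^b{}_d$ with row index $(a,b)$, column $(c,d)$, ordered $11,12,21,22$; repeated indices summed. $R$ is superizable w.r.t. $p$ if $R^a{}_c{}^b{}_d=0$ whenever $p(a)+p(b)-p(c)-p(d)\not\equiv0\pmod2$. The super FRT bialgebra $A(\underline R)$ is generated by $1$ and $u^i{}_j$ of degree $p(i)+p(j)$ with relations $(-1)^{p(a)p(b)+p(c)p(e)}\underline R^a{}_f{}^b{}_e\,u^f{}_c\,u^e{}_d=(-1)^{p(c)p(d)+p(r)p(a)}u^b{}_r\,u^a{}_s\,\underline R^s{}_c{}^r{}_d$, super-coproduct $\underline\Delta u^i{}_j=\sum_ku^i{}_k\otimes u^k{}_j$ in the graded tensor product, counit $\delta^i_j$; here $u^1{}_1=\alpha$, $u^1{}_2=\beta$, $u^2{}_1=\gamma$, $u^2{}_2=\delta$. *)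

(* Defs.v *)
From HB Require Import structures.
From mathcomp Require Import all_boot all_order all_algebra.
Set Implicit Arguments. Unset Strict Implicit. Unset Printing Implicit Defensive.
Import GRing.Theory.
Local Open Scope ring_scope.

(* Indices 1,2 of the paper are the ordinals 0,1 of 'I_2. *)
Notation i1 := (@ord0 1).
Notation i2 := (@ord_max 1).

Definition par (i : 'I_2) : nat := nat_of_ord i.

(* A family of entries R^a_c^b_d is written  R a c b d. *)
Definition superizable {k : nzRingType} (R : 'I_2 -> 'I_2 -> 'I_2 -> 'I_2 -> k)
  (p : 'I_2 -> nat) : Prop :=
  forall a c b d : 'I_2,
    ~~ (2 %| ((p a)%:Z + (p b)%:Z - (p c)%:Z - (p d)%:Z))%Z -> R a c b d = 0.

(* R_Omega as a 4x4 matrix: row (a,b) and column (c,d), ordered 11,12,21,22,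
   i.e. row index 2a+b and column index 2c+d (0-based). *)
Definition R_Omega {k : fieldType} (q : k) (a c b d : 'I_2) : k :=
  match (2 * a + b)%N, (2 * c + d)%N with
  | 0, 0 => q
  | 1, 1 => q
  | 1, 2 => q - q^-1
  | 2, 2 => q^-1
  | 3, 3 => - q^-1
  | _, _ => 0
  end.

Definition super_R {k : nzRingType} (R : 'I_2 -> 'I_2 -> 'I_2 -> 'I_2 -> k)
  (p : 'I_2 -> nat) (a c b d : 'I_2) : k :=
  (-1) ^+ (p a * p b) * R a c b d.

Definition FRT_rel {k : nzRingType} {A : lalgType k}
  (Rs : 'I_2 -> 'I_2 -> 'I_2 -> 'I_2 -> k) (p : 'I_2 -> nat)
  (u : 'I_2 -> 'I_2 -> A) : Prop :=
  forall a b c d : 'I_2,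
    \sum_(e < 2) \sum_(f < 2)
       (((-1) ^+ (p a * p b + p c * p e) * Rs a f b e) *: (u f c * u e d))
    = \sum_(r < 2) \sum_(s < 2)
       (((-1) ^+ (p c * p d + p r * p a) * Rs s c r d) *: (u b r * u a s)).

(* The listed relations, with  alpha = u i1 i1, beta = u i1 i2,
   gamma = u i2 i1, delta = u i2 i2, where  pr i j k l  stands for the
   product of the generators u^i_j and u^k_l (so that the same relations can
   be written for an opposite / super-opposite product). *)
Definition GL_relP {k : fieldType} {A : lalgType k} (q : k)
  (pr : 'I_2 -> 'I_2 -> 'I_2 -> 'I_2 -> A) : Prop :=
  (pr i1 i2 i1 i1 = pr i1 i1 i1 i2 /\
      pr i2 i1 i1 i1 = q ^+ 2 *: pr i1 i1 i2 i1 /\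
      pr i2 i2 i1 i2 = pr i1 i2 i2 i2 /\
      pr i2 i2 i2 i1 = q ^- 2 *: pr i2 i1 i2 i2 /\
      pr i2 i1 i1 i2 = - (q ^+ 2) *: pr i1 i2 i2 i1 /\
      pr i2 i2 i1 i1 - pr i1 i1 i2 i2 = (1 - q ^+ 2) *: pr i1 i2 i2 i1/\
      pr i1 i2 i1 i2 = 0 /\
    pr i2 i1 i2 i1 = 0).

Definition GL_rel {k : fieldType} {A : lalgType k} (q : k)
  (u : 'I_2 -> 'I_2 -> A) : Prop :=
  GL_relP q (fun i j k l => u i j * u k l).

(* Elements x i j and y k l supercommute (images of u^i_j (x) 1 and 1 (x) u^k_l
   in the graded tensor product). *)
Definition supercomm {A : nzRingType} (p : 'I_2 -> nat)
  (x y : 'I_2 -> 'I_2 -> A) : Prop :=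
  forall i j k l : 'I_2,
    x i j * y k l = (-1) ^+ ((p i + p j) * (p k + p l)) * (y k l * x i j).

Definition mxprod {A : nzRingType} (x y : 'I_2 -> 'I_2 -> A) : 'I_2 -> 'I_2 -> A :=
  fun i j => \sum_(m < 2) x i m * y m j.

(* Identity 2x2 family (value of the counit on u). *)
Definition id2 {A : nzRingType} : 'I_2 -> 'I_2 -> A := fun i j => (i == j)%:R.

Definition antipode {A : unitRingType} (u : 'I_2 -> 'I_2 -> A) : 'I_2 -> 'I_2 -> A :=
  let al := u i1 i1 in let be := u i1 i2 in
  let ga := u i2 i1 in let de := u i2 i2 in
  fun i j =>
  if i == i1 then
    if j == i1 then al^-1 + al^-1 * be * de^-1 * ga * al^-1
    else - (al^-1 * be * de^-1)
  else
    if j == i1 then - (de^-1 * ga * al^-1)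
    else de^-1 + de^-1 * ga * al^-1 * be * de^-1.

Definition sdet {A : unitRingType} (u : 'I_2 -> 'I_2 -> A) : A :=
  u i1 i1 * (u i2 i2)^-1 - u i1 i2 * (u i2 i2)^-1 * u i2 i1 * (u i2 i2)^-1.

Definition parity_inv {k : fieldType} {A : lalgType k} (p : 'I_2 -> nat)
  (u : 'I_2 -> 'I_2 -> A) : 'I_2 -> 'I_2 -> A :=
  fun i j => (-1) ^+ (p i + p j) *: u i j.

(* Main.v *)
From HB Require Import structures.
From mathcomp Require Import all_boot all_order all_algebra.
From mathcomp Require Import ring.
From Stdlib Require Import FunctionalExtensionality.
Require Import Defs.
Import GRing.Theory.
Local Open Scope ring_scope.

(* ---------- coefficients: Laurent polynomials in q, int coefficients ---------- *)
Definition coef := seq (int * int).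

Fixpoint cins (t : int * int) (c : coef) : coef :=
  match c with
  | [::] => [:: t]
  | u :: c' => if u.1 == t.1 then (u.1, u.2 + t.2) :: c' else u :: cins t c'
  end.
Definition cadd (c1 c2 : coef) : coef := foldr cins c2 c1.
Definition cmul (c1 c2 : coef) : coef :=
  foldr (fun t acc => foldr (fun u acc' => cins (t.1 + u.1, t.2 * u.2) acc') acc c2) [::] c1.
Definition copp (c : coef) : coef := map (fun t => (t.1, - t.2)) c.
Definition cclean (c : coef) : coef := filter (fun t => t.2 != 0) c.

Inductive sexp :=
| SQ | SQi | SQp of nat | SQn of nat | S1 | S0
| SAdd of sexp & sexp | SMul of sexp & sexp | SOpp of sexp | SPow of sexp & nat
| SR of bool & bool & bool & bool.

Definition Rtab (a c b d : bool) : coef :=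
  match a, c, b, d with
  | false, false, false, false => [:: (1, 1)]
  | false, false, true, true => [:: (1, 1)]
  | false, true, true, false => [:: (1, 1); (-1, -1)]
  | true, true, false, false => [:: (-1, 1)]
  | true, true, true, true => [:: (-1, 1)]
  | _, _, _, _ => [::]
  end.

Fixpoint tocoef (s : sexp) : coef :=
  match s with
  | SQ => [:: (1, 1)]
  | SQi => [:: (-1, 1)]
  | SQp n => [:: (Posz n, 1)]
  | SQn n => [:: (- Posz n, 1)]
  | S1 => [:: (0, 1)]
  | S0 => [::]
  | SAdd x y => cadd (tocoef x) (tocoef y)
  | SMul x y => cmul (tocoef x) (tocoef y)
  | SOpp x => copp (tocoef x)
  | SPow x n => iter n (cmul (tocoef x)) [:: (0, 1)]
  | SR a c b d => Rtab a c b d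
  end.

Definition term := (coef * seq nat)%type.
Definition poly := seq term.

Fixpoint pins (t : term) (p : poly) : poly :=
  match p with
  | [::] => if cclean t.1 is [::] then [::] else [:: (cclean t.1, t.2)]
  | u :: p' => if u.2 == t.2 then
                 (if cclean (cadd u.1 t.1) is [::] then p' else (cclean (cadd u.1 t.1), u.2) :: p')
               else u :: pins t p'
  end.

Fixpoint rlook (rl : seq (nat * nat * poly)) (x y : nat) : option poly :=
  match rl with
  | [::] => None
  | r :: rl' => if (r.1.1 == x) && (r.1.2 == y) then Some r.2 else rlook rl' x y
  end.

Fixpoint wstep (rl : seq (nat * nat * poly)) (w : seq nat) : option poly :=
  match w with
  | x :: w' =>
    match w' with
    | y :: w'' =>
      match wstep rl w' with
      | Some p => Some (map (fun t => (t.1, x :: t.2)) p)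
      | None => omap (map (fun t => (t.1, t.2 ++ w''))) (rlook rl x y)
      end
    | [::] => None
    end
  | [::] => None
  end.

Definition pstep rl (p : poly) : bool * poly :=
  foldr (fun t acc =>
     match wstep rl t.2 with
     | Some p' => (true, foldr pins acc.2 (map (fun u => (cmul t.1 u.1, u.2)) p'))
     | None => (acc.1, pins t acc.2)
     end) (false, [::]) p.

Fixpoint nf rl (n : nat) (p : poly) : poly :=
  if n is n'.+1 then
    let pp := pstep rl p in if pp.1 then nf rl n' pp.2 else pp.2
  else p.

Inductive pexp :=
| PAt of nat | P0 | P1 | PAdd of pexp & pexp | PMul of pexp & pexp
| POpp of pexp | PSc of sexp & pexp | PPow of pexp & nat.

Fixpoint topoly (e : pexp) : poly :=
  match e with
  | PAt n => [:: ([:: (0, 1)], [:: n])]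
  | P0 => [::]
  | P1 => [:: ([:: (0, 1)], [::])]
  | PAdd x y => topoly x ++ topoly y
  | PMul x y => [seq (cmul t.1 u.1, t.2 ++ u.2) | t <- topoly x, u <- topoly y]
  | POpp x => [seq (copp t.1, t.2) | t <- topoly x]
  | PSc s x => [seq (cmul (tocoef s) t.1, t.2) | t <- topoly x]
  | PPow x n => iter n (fun p => [seq (cmul t.1 u.1, t.2 ++ u.2) | t <- topoly x, u <- p])
                  [:: ([:: (0, 1)], [::])]
  end.

Definition isnil {T} (s : seq T) := if s is [::] then true else false.

Definition ob (x : bool) : 'I_2 := if x then i2 else i1.

Section Sem.
Variables (k : fieldType) (q : k).

Definition ceval (c : coef) : k := foldr (fun t acc => t.2%:~R * q ^ t.1 + acc) 0 c.

Fixpoint teval (s : sexp) : k :=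
  match s with
  | SQ => q
  | SQi => q^-1
  | SQp n => q ^+ n
  | SQn n => q ^- n
  | S1 => 1
  | S0 => 0
  | SAdd x y => teval x + teval y
  | SMul x y => teval x * teval y
  | SOpp x => - teval x
  | SPow x n => teval x ^+ n
  | SR a c b d => super_R (R_Omega q) par (ob a) (ob c) (ob b) (ob d)
  end.

Variable (A : algType k) (L : nat -> A).

Definition wden (w : seq nat) : A := foldr (fun n acc => L n * acc) 1 w.
Definition pden (p : poly) : A := foldr (fun t acc => ceval t.1 *: wden t.2 + acc) 0 p.

Fixpoint eden (e : pexp) : A :=
  match e with
  | PAt n => L n
  | P0 => 0
  | P1 => 1
  | PAdd x y => eden x + eden y
  | PMul x y => eden x * eden y
  | POpp x => - eden x
  | PSc s x => teval s *: eden x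
  | PPow x n => eden x ^+ n
  end.

Definition rules_ok (rl : seq (nat * nat * poly)) : Prop :=
  foldr (fun r P => L r.1.1 * L r.1.2 = pden r.2 /\ P) True rl.

Hypothesis hq : q != 0.

Lemma ceval_cins t c : ceval (cins t c) = t.2%:~R * q ^ t.1 + ceval c.
Proof.
elim: c => [|u c0 IH] /=; [by []|].
case: eqP => [e|_] /=; last by rewrite IH; ring.
by rewrite e intrD mulrDl; ring.
Qed.

Lemma ceval_cadd c1 c2 : ceval (cadd c1 c2) = ceval c1 + ceval c2.
Proof. by elim: c1 => [|t c0 IH] /=; rewrite ?add0r // ceval_cins IH addrA. Qed.

Lemma ceval_cmul_aux (t : int * int) c2 acc :
  ceval (foldr (fun u acc' => cins (t.1 + u.1, t.2 * u.2) acc') acc c2)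
  = t.2%:~R * q ^ t.1 * ceval c2 + ceval acc.
Proof.
elim: c2 => [|u c2 IH2] /=; first by rewrite mulr0 add0r.
rewrite ceval_cins IH2 /= intrM expfzDr //; ring.
Qed.

Lemma ceval_cmul c1 c2 : ceval (cmul c1 c2) = ceval c1 * ceval c2.
Proof.
rewrite /cmul; elim: c1 => [|t c0 IH] /=; first by rewrite mul0r.
by rewrite ceval_cmul_aux IH mulrDl.
Qed.

Lemma ceval_copp c : ceval (copp c) = - ceval c.
Proof. by elim: c => [|t c0 IH] /=; rewrite ?oppr0 // IH opprD intrN mulNr. Qed.

Lemma ceval_cclean c : ceval (cclean c) = ceval c.
Proof.
elim: c => [|t c0 IH] //=; case: eqP => [->|] /=; rewrite IH //.
by rewrite mul0r add0r.
Qed.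

Lemma ceval_iter s n : ceval (iter n (cmul (tocoef s)) [:: (0, 1)]) = ceval (tocoef s) ^+ n.
Proof.
elim: n => [|n IH] /=; first by rewrite mul1r addr0.
by rewrite ceval_cmul IH exprS.
Qed.

Lemma ceval_Rtab a c b d : ceval (Rtab a c b d) = super_R (R_Omega q) par (ob a) (ob c) (ob b) (ob d).
Proof.
rewrite /super_R.
case: a; case: c; case: b; case: d; rewrite /R_Omega /= ?mulr0 // ?mul1n ?muln1 ?muln0 ?mul0n ?expr0 ?expr1
   ?(intrN _ 1) ?ir1 ?mul1r ?mulN1r ?opprK ?addr0 ?expr1z ?exprN1 //.
Qed.

Lemma ir1 : ((1 : int)%:~R : k) = 1. Proof. by []. Qed.

Lemma ceval_tocoef s : ceval (tocoef s) = teval s.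
Proof.
elim: s => [||n|n|||x IHx y IHy|x IHx y IHy|x IHx|x IHx n|a c b d] /=;
  rewrite ?ir1 ?mul1r ?addr0.
- by rewrite expr1z.
- by rewrite exprN1.
- by [].
- by rewrite exprnN.
- by rewrite expr0z.
- by [].
- by rewrite ceval_cadd IHx IHy.
- by rewrite ceval_cmul IHx IHy.
- by rewrite ceval_copp IHx.
- by rewrite ceval_iter IHx.
- by rewrite ceval_Rtab.
Qed.

Lemma wden_cat w1 w2 : wden (w1 ++ w2) = wden w1 * wden w2.
Proof. by elim: w1 => [|n w IH] /=; rewrite ?mul1r // IH mulrA. Qed.

Lemma pden_cat p1 p2 : pden (p1 ++ p2) = pden p1 + pden p2.
Proof. by elim: p1 => [|t p IH] /=; rewrite ?add0r // IH addrA. Qed.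

Lemma pden_pins t p : pden (pins t p) = ceval t.1 *: wden t.2 + pden p.
Proof.
elim: p => [|u p IH] /=.
  by case E: (cclean t.1) => [|x l]; rewrite /= -(ceval_cclean t.1) E ?scale0r ?addr0.
case: eqP => [e|_] /=; last by rewrite IH addrCA.
have := ceval_cclean (cadd u.1 t.1); rewrite ceval_cadd.
case: (cclean _) => [|x l] H /=.
  by rewrite e addrA -scalerDl (addrC (ceval t.1)) -H scale0r add0r.
rewrite -[ceval (x :: l)]/(x.2%:~R * q ^ x.1 + ceval l) in H. by rewrite H e scalerDl addrA (addrC (_ *: _)).
Qed.

Lemma pden_foldr_pins l acc : pden (foldr pins acc l) = pden l + pden acc.
Proof. by elim: l => [|t l IH] /=; rewrite ?add0r // pden_pins IH addrA. Qed.

Lemma pden_scale c p : pden (map (fun u => (cmul c u.1, u.2)) p) = ceval c *: pden p.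
Proof.
elim: p => [|u p IH] /=; first by rewrite scaler0.
by rewrite IH ceval_cmul scalerDr scalerA.
Qed.

Lemma pden_mulr p w : pden [seq (t.1, t.2 ++ w) | t <- p] = pden p * wden w.
Proof.
elim: p => [|t p IH] /=; first by rewrite mul0r.
by rewrite IH mulrDl wden_cat scalerAl.
Qed.

Lemma pden_mull x p : pden (map (fun t => (t.1, x :: t.2)) p) = L x * pden p.
Proof.
elim: p => [|t p IH] /=; first by rewrite mulr0.
by rewrite IH mulrDr scalerAr.
Qed.

Variable rl : seq (nat * nat * poly).
Hypothesis Hrl : rules_ok rl.

Lemma rlook_ok x y p : rlook rl x y = Some p -> L x * L y = pden p.
Proof.
move: Hrl; elim: rl => [|r rl' IH] //= [Hr Hr'].
case: andP => [[/eqP e1 /eqP e2] [<-]|_]; last exact: IH.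
by rewrite -e1 -e2.
Qed.

Lemma wstep_ok w p : wstep rl w = Some p -> pden p = wden w.
Proof.
elim: w p => [|x w IH] p //=.
case: w IH => [|y w''] IH //.
case E2: (wstep rl (y :: w'')) => [p1|] /=.
  by move=> [<-]; rewrite pden_mull (IH _ E2).
case E: (rlook rl x y) => [p0|] //= [<-].
by rewrite pden_mulr -(rlook_ok _ _ _ E) /= mulrA.
Qed.

Lemma pstep_ok p : pden (pstep rl p).2 = pden p.
Proof.
elim: p => [|t p IH] //=.
rewrite /pstep /= -/(pstep rl p).
case E: (wstep rl t.2) => [p'|] /=.
  by rewrite pden_foldr_pins IH pden_scale (wstep_ok _ _ E).
by rewrite pden_pins IH.
Qed.

Lemma nf_ok n p : pden (nf rl n p) = pden p.
Proof.
elim: n p => [|n IH] p //=.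
by case: ifP => _; rewrite ?IH pstep_ok.
Qed.

Lemma topoly_mul p1 p2 :
  pden [seq (cmul t.1 u.1, t.2 ++ u.2) | t <- p1, u <- p2] = pden p1 * pden p2.
Proof.
elim: p1 => [|t p1 IH] /=; first by rewrite mul0r.
rewrite pden_cat IH mulrDl; congr (_ + _).
clear IH; elim: p2 => [|u p2 IH2] /=; first by rewrite !mulr0.
rewrite IH2 mulrDr ceval_cmul wden_cat; congr (_ + _).
by rewrite -scalerAl -scalerAr scalerA.
Qed.

Lemma topoly_ok e : pden (topoly e) = eden e.
Proof.
elim: e => [n||| x IHx y IHy| x IHx y IHy| x IHx| s x IHx| x IHx n] /=.
- by rewrite ir1 expr0z !mulr1 !addr0 scale1r.
- by [].
- by rewrite ir1 expr0z !mulr1 !addr0 scale1r.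
- by rewrite pden_cat IHx IHy.
- by rewrite topoly_mul IHx IHy.
- rewrite -IHx; elim: (topoly x) => [|t p IH] /=; first by rewrite oppr0.
  by rewrite IH opprD ceval_copp scaleNr.
- by rewrite pden_scale IHx ceval_tocoef.
- elim: n => [|n IH] /=; first by rewrite ir1 expr0z !mulr1 !addr0 scale1r.
  by rewrite topoly_mul IHx IH exprS.
Qed.

Lemma engine_ok fuel e1 e2 :
  isnil (nf rl fuel (topoly (PAdd e1 (POpp e2)))) -> eden e1 = eden e2.
Proof.
move=> H; apply/eqP; rewrite -subr_eq0; apply/eqP.
rewrite -[eden e1 - eden e2]/(eden (PAdd e1 (POpp e2))) -topoly_ok -(nf_ok fuel).
by case: (nf rl fuel _) H.
Qed.

End Sem.

Arguments ceval {k} q c.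
Arguments teval {k} q s.
Arguments wden {k A} L w.
Arguments pden {k} q {A} L p.
Arguments eden {k} q {A} L e.
Arguments rules_ok {k} q {A} L rl.

Definition srule := (nat * nat * seq (sexp * seq nat))%type.
Definition rl2poly (rl : seq srule) : seq (nat * nat * poly) :=
  map (fun r => (r.1, map (fun t => (tocoef t.1, t.2)) r.2)) rl.

Section Sem2.
Variables (k : fieldType) (q : k) (A : algType k) (L : nat -> A).
Hypothesis hq : q != 0.

Definition sden (l : seq (sexp * seq nat)) : A :=
  foldr (fun t acc => teval q t.1 *: wden L t.2 + acc) 0 l.

Definition srules_ok (rl : seq srule) : Prop :=
  foldr (fun r P => L r.1.1 * L r.1.2 = sden r.2 /\ P) True rl.

Lemma srules_okP rl : srules_ok rl -> rules_ok q L (rl2poly rl).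
Proof.
elim: rl => [|r rl IH] //= [H1 H2]; split; last exact: IH.
rewrite H1; elim: r.2 => [|t l IHl] //=.
by rewrite IHl ceval_tocoef.
Qed.

Lemma srules_ok_cat r1 r2 : srules_ok r1 -> srules_ok r2 -> srules_ok (r1 ++ r2).
Proof. by elim: r1 => [|r r1 IH] //= [H1 H2] H3; split => //; apply: IH. Qed.

End Sem2.

Arguments engine_ok {k q A L} hq {rl} Hrl fuel e1 e2.
Arguments srules_ok {k} q {A} L rl.
Arguments sden {k} q {A} L l.
Arguments srules_okP {k q A L} hq {rl}.
Arguments srules_ok_cat {k q A L} {r1 r2}.

Ltac find_idx x l :=
  lazymatch l with
  | x :: _ => constr:(0%N)
  | _ :: ?l' => let n := find_idx x l' in constr:(S n)
  | _ => fail 100 "atom not found" x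
  end.

Ltac reify_ord o := lazymatch o with ord0 => constr:(false) | ord_max => constr:(true) end.

Ltac reifyS q s :=
  lazymatch s with
  | q => constr:(SQ)
  | q^-1 => constr:(SQi)
  | q ^+ ?n => constr:(SQp n)
  | q ^- ?n => constr:(SQn n)
  | 1 => constr:(S1)
  | 0 => constr:(S0)
  | ?x + ?y => let a := reifyS q x in let b := reifyS q y in constr:(SAdd a b)
  | ?x * ?y => let a := reifyS q x in let b := reifyS q y in constr:(SMul a b)
  | - ?x => let a := reifyS q x in constr:(SOpp a)
  | ?x ^+ ?n => let a := reifyS q x in constr:(SPow a n)
  | super_R (R_Omega q) par ?a ?c ?b ?d =>
      let a' := reify_ord a in let c' := reify_ord c in
      let b' := reify_ord b in let d' := reify_ord d in constr:(SR a' c' b' d')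
  | _ => fail 100 "bad scalar" s
  end.

Ltac reifyP q l e :=
  lazymatch e with
  | ?x + ?y => let a := reifyP q l x in let b := reifyP q l y in constr:(PAdd a b)
  | - ?x => let a := reifyP q l x in constr:(POpp a)
  | ?x * ?y => let a := reifyP q l x in let b := reifyP q l y in constr:(PMul a b)
  | ?s *: ?x => let a := reifyS q s in let b := reifyP q l x in constr:(PSc a b)
  | ?x ^+ ?n => let a := reifyP q l x in constr:(PPow a n)
  | 1 => constr:(P1)
  | 0 => constr:(P0)
  | _ => let n := find_idx e l in constr:(PAt n)
  end.

Ltac engine hq l Hrl fuel :=
  lazymatch goal with |- @eq ?T ?x ?y =>
    lazymatch type of hq with is_true (?q != 0) =>
    let e1 := reifyP q l x in let e2 := reifyP q l y in
    change (eden q (fun n => nth 0 l n) e1 = eden q (fun n => nth 0 l n) e2);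
    apply: (engine_ok hq (srules_okP hq Hrl) fuel); vm_compute; reflexivity
    end
  end.


Set Implicit Arguments. Unset Strict Implicit.
Definition kap := SAdd S1 (SOpp (SQp 2)).
Definition rl_basic : seq srule := [::
 (2,0,[:: (S1,[::0;2])]);
 (3,0,[:: (SQp 2,[::0;3])]);
 (2,4,[:: (S1,[::4;2])]);
 (3,4,[:: (SQp 2,[::4;3])]);
 (3,2,[:: (SOpp (SQp 2),[::2;3])]);
 (2,2,[::]); (3,3,[::]);
 (4,0,[:: (S1,[::0;4]); (kap,[::2;3])]) ]%N.
Definition rl_inv : seq srule := [::
 (0,1,[:: (S1,[::])]); (1,0,[:: (S1,[::])]); (4,5,[:: (S1,[::])]); (5,4,[:: (S1,[::])]);
 (2,1,[:: (S1,[::1;2])]); (3,1,[:: (SQn 2,[::1;3])]);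
 (2,5,[:: (S1,[::5;2])]); (3,5,[:: (SQn 2,[::5;3])]);
 (4,1,[:: (S1,[::1;4]); (SOpp (SMul kap (SQn 2)),[::1;1;2;3])]);
 (5,0,[:: (S1,[::0;5]); (SOpp (SMul kap (SQn 2)),[::5;5;2;3])]);
 (5,1,[:: (S1,[::1;5]); (SMul (SMul kap (SQn 2)) (SQn 2),[::5;1;1;5;2;3])]) ]%N.

Section Fam.
Variables (k : fieldType) (q : k).
Hypothesis hq : q != 0.

Lemma q2V : q ^+ 2 * q ^- 2 = 1.
Proof. by rewrite mulfV // expf_neq0. Qed.
Lemma qV2 : q ^- 2 * q ^+ 2 = 1.
Proof. by rewrite mulVf // expf_neq0. Qed.

Section Basic.
Variables (A : algType k) (a b c d : A).
Hypotheses (Hba : b * a = a * b) (Hca : c * a = q ^+ 2 *: (a * c))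
  (Hdb : d * b = b * d) (Hdc : d * c = q ^- 2 *: (c * d))
  (Hcb : c * b = - q ^+ 2 *: (b * c)) (Hda : d * a - a * d = (1 - q ^+ 2) *: (b * c))
  (Hbb : b * b = 0) (Hcc : c * c = 0).

Lemma Hcd : c * d = q ^+ 2 *: (d * c).
Proof. by rewrite Hdc scalerA q2V scale1r. Qed.

Lemma Hac : a * c = q ^- 2 *: (c * a).
Proof. by rewrite Hca scalerA qV2 scale1r. Qed.

Lemma basic_ok (x y : A) : srules_ok q (fun n => nth 0 [:: a; x; b; c; d; y] n) rl_basic.
Proof.
rewrite /srules_ok /sden /=; rewrite !mulr1 !addr0 !scale1r.
do !split => //.
- exact: Hcd.
- by rewrite -Hda addrC subrK.
Qed.
End Basic.

Section Inv.
Variables (A : unitAlgType k) (a b c d : A).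
Hypotheses (Hba : b * a = a * b) (Hca : c * a = q ^+ 2 *: (a * c))
  (Hdb : d * b = b * d) (Hdc : d * c = q ^- 2 *: (c * d))
  (Hcb : c * b = - q ^+ 2 *: (b * c)) (Hda : d * a - a * d = (1 - q ^+ 2) *: (b * c))
  (Hbb : b * b = 0) (Hcc : c * c = 0) (ua : a \is a GRing.unit) (ud : d \is a GRing.unit).

Lemma conj_lem (x y : A) : x \is a GRing.unit -> y * x^-1 = x^-1 * (x * y) * x^-1.
Proof. by move=> ux; rewrite mulrA mulVr // mul1r. Qed.

Lemma inv_ok : srules_ok q (fun n => nth 0 [:: a; a^-1; b; c; d; d^-1] n) (rl_basic ++ rl_inv).
Proof.
apply: srules_ok_cat; first exact: basic_ok.
rewrite /srules_ok /sden /=; rewrite !mulr1 !addr0 !scale1r.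
have bA : b * a^-1 = a^-1 * b by apply: commrV.
have bD : b * d^-1 = d^-1 * b by apply: commrV; rewrite /GRing.comm Hdb.
have cA : c * a^-1 = q ^- 2 *: (a^-1 * c).
  by rewrite (conj_lem _ ua) (Hac Hca) -scalerAr -scalerAl -!mulrA mulrV // mulr1.
have cD : c * d^-1 = q ^- 2 *: (d^-1 * c).
  by rewrite (conj_lem _ ud) Hdc -scalerAr -scalerAl -!mulrA mulrV // mulr1.
have ad : a * d = d * a - (1 - q ^+ 2) *: (b * c) by rewrite -Hda opprB addrC subrK.
have da' : d * a = a * d + (1 - q ^+ 2) *: (b * c) by rewrite -Hda addrC subrK.
have bcA : b * (c * a^-1) = q ^- 2 *: (a^-1 * (b * c)).
  by rewrite cA -scalerAr mulrA bA -mulrA.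
have bcD : b * (c * d^-1) = q ^- 2 *: (d^-1 * (b * c)).
  by rewrite cD -scalerAr mulrA bD -mulrA.
have dA : d * a^-1 = a^-1 * d + - ((1 - q ^+ 2) / q ^+ 2) *: (a^-1 * (a^-1 * (b * c))).
  rewrite (conj_lem _ ua) ad mulrBr mulrBl -!mulrA mulrV // mulr1.
  by rewrite -scalerAl -mulrA bcA -!scalerAr scalerA scaleNr.
have Da : d^-1 * a = a * d^-1 + - ((1 - q ^+ 2) / q ^+ 2) *: (d^-1 * (d^-1 * (b * c))).
  have e : a * d^-1 = d^-1 * (d * a) * d^-1 by rewrite mulrA mulVr // mul1r.
  rewrite e da' mulrDr mulrDl -!mulrA mulrV // mulr1.
  rewrite -scalerAl -mulrA bcD -!scalerAr scalerA scaleNr addrK.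
  done.
have DA : d^-1 * a^-1 = a^-1 * d^-1 + ((1 - q ^+ 2) / q ^+ 2 / q ^+ 2) *:
    (d^-1 * (a^-1 * (a^-1 * (d^-1 * (b * c))))).
  have e : a^-1 * d^-1 = d^-1 * (d * a^-1) * d^-1 by rewrite mulrA mulVr // mul1r.
  rewrite e dA mulrDr mulrDl -!mulrA mulrV // mulr1.
  rewrite -scalerAl -!mulrA bcD -!scalerAr !scalerA -addrA -scalerDl.
  have -> : (- ((1 - q ^+ 2) / q ^+ 2) / q ^+ 2 + (1 - q ^+ 2) * (q ^- 2 / q ^+ 2)) = 0.
    by field.
  by rewrite scale0r addr0.
do !split => //.
- exact: mulrV.
- exact: mulVr.
- exact: mulrV.
- exact: mulVr.
Qed.
End Inv.
End Fam.



Lemma I2_cases (P : 'I_2 -> Prop) : P i1 -> P i2 -> forall i, P i.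
Proof.
move=> H1 H2 [[|[|n]] Hi] //.
- by rewrite (_ : Ordinal Hi = i1) //; apply: val_inj.
- by rewrite (_ : Ordinal Hi = i2) //; apply: val_inj.
Qed.

Lemma sum2 (V : zmodType) (F : 'I_2 -> V) : \sum_(i < 2) F i = F i1 + F i2.
Proof. by rewrite big_ord_recl big_ord1; congr (_ + F _); apply: val_inj. Qed.

Lemma superiz (k : fieldType) (q : k) : superizable (R_Omega q) par.
Proof.
move=> a c b d.
elim/I2_cases: a; elim/I2_cases: c; elim/I2_cases: b; elim/I2_cases: d => //.
Qed.

Lemma counit_ok (k : fieldType) (q : k) : GL_rel q (@id2 k^o).
Proof.
rewrite /GL_rel /GL_relP /id2 /=.
rewrite ?mulr0 ?mul0r ?mulr1 ?mul1r ?scaler0 ?subrr.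
by do !split.
Qed.

Lemma sdet_id2 (k : fieldType) : sdet (@id2 k) = 1.
Proof. by rewrite /sdet /id2 /= invr1 !mulr1 mul0r subr0. Qed.


Lemma GL_basic (k : fieldType) (q : k) (hq : q != 0) (A : algType k) (u : 'I_2 -> 'I_2 -> A) :
  GL_rel q u ->
  srules_ok q (fun n => nth 0 [:: u i1 i1; u i1 i1; u i1 i2; u i2 i1; u i2 i2; u i2 i2] n) rl_basic.
Proof.
move=> Hu; rewrite /GL_rel /GL_relP in Hu; simpl in Hu.
case: Hu => [Hba [Hca [Hdb [Hdc [Hcb [Hda [Hbb Hcc]]]]]]].
exact: (basic_ok hq Hba Hca Hdb Hdc Hcb Hda Hbb Hcc).
Qed.

Lemma GL_to_FRT (k : fieldType) (q : k) (hq : q != 0) (A : algType k) (u : 'I_2 -> 'I_2 -> A) :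
  GL_rel q u -> FRT_rel (super_R (R_Omega q) par) par u.
Proof.
move=> /(@GL_basic _ _ hq) H a b c d.
elim/I2_cases: a; elim/I2_cases: b; elim/I2_cases: c; elim/I2_cases: d;
 rewrite !sum2;
 engine hq [:: u i1 i1; u i1 i1; u i1 i2; u i2 i1; u i2 i2; u i2 i2] H 50%N.
Qed.

Lemma lin1 (k : fieldType) (A : lmodType k) (P Q X Y : A) (s : k) :
  P = Q -> X - Y = s *: (P - Q) -> X = Y.
Proof. by move=> -> /eqP; rewrite subrr scaler0 subr_eq0 => /eqP. Qed.

Lemma lin0 (k : fieldType) (A : lmodType k) (P Q X : A) (s : k) :
  P = Q -> s *: X = P - Q -> s != 0 -> X = 0.
Proof. by move=> -> /eqP; rewrite subrr scaler_eq0 => /orP [/eqP -> /eqP|/eqP]. Qed.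

Arguments lin1 {k A P Q X Y} s.
Arguments lin0 {k A P Q X} s.

Lemma FRT_to_GL (k : fieldType) (q : k) (hq : q != 0) (hq2 : q ^+ 2 + 1 != 0)
   (A : algType k) (u : 'I_2 -> 'I_2 -> A) :
  FRT_rel (super_R (R_Omega q) par) par u -> GL_rel q u.
Proof.
move=> H.
have H0 : srules_ok q (fun n => nth 0 [:: u i1 i1; u i1 i1; u i1 i2; u i2 i1; u i2 i2; u i2 i2] n) [::] := I.
have s0 : q + q^-1 != 0.
  have -> : q + q^-1 = (q ^+ 2 + 1) / q by field.
  by rewrite mulf_neq0 // invr_eq0.
rewrite /GL_rel /GL_relP /=.
split; first (apply: (lin1 (- q^-1) (H i1 i1 i1 i2)); rewrite !sum2;
  engine hq [:: u i1 i1; u i1 i1; u i1 i2; u i2 i1; u i2 i2; u i2 i2] H0 5%N).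
split; first (apply: (lin1 (- q) (H i1 i2 i1 i1)); rewrite !sum2;
  engine hq [:: u i1 i1; u i1 i1; u i1 i2; u i2 i1; u i2 i2; u i2 i2] H0 5%N).
split; first (apply: (lin1 (q^-1) (H i1 i2 i2 i2)); rewrite !sum2;
  engine hq [:: u i1 i1; u i1 i1; u i1 i2; u i2 i1; u i2 i2; u i2 i2] H0 5%N).
split; first (apply: (lin1 (q^-1) (H i2 i2 i1 i2)); rewrite !sum2;
  engine hq [:: u i1 i1; u i1 i1; u i1 i2; u i2 i1; u i2 i2; u i2 i2] H0 5%N).
split; first (apply: (lin1 (- q) (H i1 i2 i2 i1)); rewrite !sum2;
  engine hq [:: u i1 i1; u i1 i1; u i1 i2; u i2 i1; u i2 i2; u i2 i2] H0 5%N).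
split; first (apply: (lin1 (q) (H i2 i1 i2 i1)); rewrite !sum2;
  engine hq [:: u i1 i1; u i1 i1; u i1 i2; u i2 i1; u i2 i2; u i2 i2] H0 5%N).
split; first (apply: (lin0 (q + q^-1) (H i1 i1 i2 i2)) => //; rewrite !sum2;
  engine hq [:: u i1 i1; u i1 i1; u i1 i2; u i2 i1; u i2 i2; u i2 i2] H0 5%N).
apply: (lin0 (- (q + q^-1)) (H i2 i2 i1 i1)); last by rewrite oppr_eq0.
rewrite !sum2;
  engine hq [:: u i1 i1; u i1 i1; u i1 i2; u i2 i1; u i2 i2; u i2 i2] H0 5%N.
Qed.


Definition shift6 (rl : seq srule) : seq srule :=
  map (fun r => ((6 + r.1.1)%N, (6 + r.1.2)%N, map (fun t => (t.1, map (addn 6) t.2)) r.2)) rl.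

Lemma srules_ok_shift (k : fieldType) (q : k) (A : algType k) (L : nat -> A) rl :
  srules_ok q (fun n => L (6 + n)%N) rl -> srules_ok q L (shift6 rl).
Proof.
have Hw : forall w, wden L (map (addn 6) w) = wden (fun n => L (6 + n)%N) w.
  by elim=> [|n w IH] //=; rewrite IH.
elim: rl => [|r rl IH] //= [H1 H2]; split; last exact: IH.
rewrite H1 /sden; elim: r.2 => [|t l IHl] //=.
by rewrite IHl Hw.
Qed.

Definition sgc (i : nat) := match i with 2 | 3 => true | _ => false end%N.
Definition cross (l : seq nat) : seq srule :=
  [seq ((6 + j)%N, i, [:: (if sgc i && sgc j then SOpp S1 else S1, [:: i; (6 + j)%N])]) | j <- l, i <- l].

Lemma sign_sq (R : pzRingType) (n : nat) : (-1) ^+ n * (-1) ^+ n = 1 :> R.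
Proof. by rewrite -expr2 sqrr_sign. Qed.

Lemma cross_lem (k : fieldType) (B : algType k) (x y : 'I_2 -> 'I_2 -> B) :
  supercomm par x y -> forall i j k' l,
  y k' l * x i j = (if (odd (par i) (+) odd (par j)) && (odd (par k') (+) odd (par l))
                    then -1 else 1) *: (x i j * y k' l).
Proof.
move=> Hs i j k' l.
have -> : y k' l * x i j = (-1) ^+ ((par i + par j) * (par k' + par l)) * (x i j * y k' l).
  by rewrite Hs mulrA sign_sq mul1r.
rewrite -signr_odd oddM !oddD mulr_sign.
by case: ifP => _; rewrite ?scaleN1r ?scale1r.
Qed.

Lemma coprod_ok (k : fieldType) (q : k) (hq : q != 0) (B : algType k)
  (x y : 'I_2 -> 'I_2 -> B) :
  GL_rel q x -> GL_rel q y -> supercomm par x y -> GL_rel q (mxprod x y).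
Proof.
move=> Hx Hy Hs.
have Hc := @cross_lem _ _ _ _ Hs.
have H : srules_ok q (fun n => nth 0 [:: x i1 i1; x i1 i1; x i1 i2; x i2 i1; x i2 i2; x i2 i2;
                                      y i1 i1; y i1 i1; y i1 i2; y i2 i1; y i2 i2; y i2 i2] n)
   (rl_basic ++ shift6 rl_basic ++ cross [:: 0; 2; 3; 4]%N).
  apply: srules_ok_cat; first exact: (@GL_basic _ _ hq _ _ Hx).
  apply: srules_ok_cat; first by apply: srules_ok_shift; exact: (@GL_basic _ _ hq _ _ Hy).
  rewrite /srules_ok /cross /=.
  by rewrite !Hc /= !mulr1 !addr0.
rewrite /GL_rel /GL_relP /mxprod !sum2.
do !split; engine hq [:: x i1 i1; x i1 i1; x i1 i2; x i2 i1; x i2 i2; x i2 i2;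
                                      y i1 i1; y i1 i1; y i1 i2; y i2 i1; y i2 i2; y i2 i2] H 100%N.
Qed.


Lemma GL_inv (k : fieldType) (q : k) (hq : q != 0) (A : unitAlgType k) (u : 'I_2 -> 'I_2 -> A) :
  GL_rel q u -> u i1 i1 \is a GRing.unit -> u i2 i2 \is a GRing.unit ->
  srules_ok q (fun n => nth 0 [:: u i1 i1; (u i1 i1)^-1; u i1 i2; u i2 i1; u i2 i2; (u i2 i2)^-1] n)
    (rl_basic ++ rl_inv).
Proof.
move=> Hu ua ud; rewrite /GL_rel /GL_relP in Hu; simpl in Hu.
case: Hu => [Hba [Hca [Hdb [Hdc [Hcb [Hda [Hbb Hcc]]]]]]].
exact: (inv_ok hq Hba Hca Hdb Hdc Hcb Hda Hbb Hcc ua ud).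
Qed.

Lemma antipode_ok (k : fieldType) (q : k) (hq : q != 0) (A : unitAlgType k) (u : 'I_2 -> 'I_2 -> A) :
  GL_rel q u -> u i1 i1 \is a GRing.unit -> u i2 i2 \is a GRing.unit ->
          [/\ mxprod (antipode u) u = id2,
              mxprod u (antipode u) = id2,
              antipode u i1 i1 \is a GRing.unit,
              antipode u i2 i2 \is a GRing.unit &
              GL_relP q (fun i j k l =>
                 (-1) ^+ ((par i + par j) * (par k + par l)) *:
                   (antipode u k l * antipode u i j))].
Proof.
move=> Hu ua ud.
have H := GL_inv hq Hu ua ud.
set A1 := (u i1 i1)^-1 in H *; set D1 := (u i2 i2)^-1 in H *.
split.
- apply: functional_extensionality => i; apply: functional_extensionality => j.
  elim/I2_cases: i; elim/I2_cases: j; rewrite /mxprod sum2 /antipode /id2 /= ?mulr1n ?mulr0n -/A1 -/D1;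
  engine hq [:: u i1 i1; A1; u i1 i2; u i2 i1; u i2 i2; D1] H 200%N.
- apply: functional_extensionality => i; apply: functional_extensionality => j.
  elim/I2_cases: i; elim/I2_cases: j; rewrite /mxprod sum2 /antipode /id2 /= ?mulr1n ?mulr0n -/A1 -/D1;
  engine hq [:: u i1 i1; A1; u i1 i2; u i2 i1; u i2 i2; D1] H 200%N.
- rewrite /antipode /= -/A1 -/D1; apply/unitrP; exists (u i1 i1 - u i1 i2 * D1 * u i2 i1).
  by split; engine hq [:: u i1 i1; A1; u i1 i2; u i2 i1; u i2 i2; D1] H 200%N.
- rewrite /antipode /= -/A1 -/D1; apply/unitrP; exists (u i2 i2 - u i2 i1 * A1 * u i1 i2).
  by split; engine hq [:: u i1 i1; A1; u i1 i2; u i2 i1; u i2 i2; D1] H 200%N.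
- rewrite /GL_relP /antipode /= -/A1 -/D1.
  by do !split; engine hq [:: u i1 i1; A1; u i1 i2; u i2 i1; u i2 i2; D1] H 200%N.
Qed.


Lemma sdet_ok (k : fieldType) (q : k) (hq : q != 0) (A : unitAlgType k) (u : 'I_2 -> 'I_2 -> A) :
          GL_rel q u -> u i1 i1 \is a GRing.unit -> u i2 i2 \is a GRing.unit ->
          (forall i j, sdet u * u i j = u i j * sdet u) /\
          sdet (parity_inv par u) = sdet u.
Proof.
move=> Hu ua ud.
have H := GL_inv hq Hu ua ud.
set A1 := (u i1 i1)^-1 in H *; set D1 := (u i2 i2)^-1 in H *.
split.
  move=> i j; elim/I2_cases: i; elim/I2_cases: j; rewrite /sdet -/A1 -/D1;
  engine hq [:: u i1 i1; A1; u i1 i2; u i2 i1; u i2 i2; D1] H 200%N.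
rewrite /sdet /parity_inv /par /= !addn0 !add0n (exprD _ 1 1) !expr1 expr0 mulrNN mulr1.
by rewrite !scale1r !scaleN1r mulNr mulrNN.
Qed.


Lemma inv_of (R : unitRingType) (m e : R) : e * m = 1 -> m * e = 1 -> m^-1 = e.
Proof.
move=> H1 H2; have um : m \is a GRing.unit by apply/unitrP; exists e.
by rewrite -[m^-1]mul1r -H1 -mulrA mulrV // mulr1.
Qed.

Lemma grouplike_ok (k : fieldType) (q : k) (hq : q != 0) (B : unitAlgType k)
  (x y : 'I_2 -> 'I_2 -> B) :
          GL_rel q x -> GL_rel q y ->
          x i1 i1 \is a GRing.unit -> x i2 i2 \is a GRing.unit ->
          y i1 i1 \is a GRing.unit -> y i2 i2 \is a GRing.unit ->
          supercomm par x y ->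
          [/\ mxprod x y i1 i1 \is a GRing.unit,
              mxprod x y i2 i2 \is a GRing.unit &
              sdet (mxprod x y) = sdet x * sdet y].
Proof.
move=> Hx Hy xa xd ya yd Hs.
have Hc := @cross_lem _ _ _ _ Hs.
have F0 : forall i k' l, y k' l * x i i = x i i * y k' l.
  by move=> i k' l; rewrite Hc addbb /= scale1r.
have F0' : forall k' i j, y k' k' * x i j = x i j * y k' k'.
  by move=> k' i j; rewrite Hc addbb andbF scale1r.
have F1 : forall i k' l, y k' l * (x i i)^-1 = (x i i)^-1 * y k' l.
  by move=> i k' l; apply: commrV.
have F2 : forall k' i j, (y k' k')^-1 * x i j = x i j * (y k' k')^-1.
  by move=> k' i j; apply: esym; apply: commrV.
have F3 : forall i k', (y k' k')^-1 * (x i i)^-1 = (x i i)^-1 * (y k' k')^-1.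
  move=> i k'; apply: esym; apply: commrV; apply: esym; exact: F1.
have H : srules_ok q (fun n => nth 0
     [:: x i1 i1; (x i1 i1)^-1; x i1 i2; x i2 i1; x i2 i2; (x i2 i2)^-1;
         y i1 i1; (y i1 i1)^-1; y i1 i2; y i2 i1; y i2 i2; (y i2 i2)^-1] n)
   ((rl_basic ++ rl_inv) ++ shift6 (rl_basic ++ rl_inv) ++ cross [:: 0; 1; 2; 3; 4; 5]%N).
  apply: srules_ok_cat; first exact: (GL_inv hq Hx xa xd).
  apply: srules_ok_cat; first by apply: srules_ok_shift; exact: (GL_inv hq Hy ya yd).
  rewrite /srules_ok /cross /= !mulr1 !addr0.
  by do !split; first [ by rewrite Hc | by rewrite F1 scale1r | by rewrite F2 scale1r
                      | by rewrite F3 scale1r ].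
set XA := (x i1 i1)^-1 in H *; set XD := (x i2 i2)^-1 in H *.
set YA := (y i1 i1)^-1 in H *; set YD := (y i2 i2)^-1 in H *.
have E11 : (YA * XA - YA * XA * (x i1 i2 * y i2 i1) * YA * XA) * mxprod x y i1 i1 = 1 /\
           mxprod x y i1 i1 * (YA * XA - YA * XA * (x i1 i2 * y i2 i1) * YA * XA) = 1.
  by rewrite /mxprod sum2; split; engine hq [:: x i1 i1; XA; x i1 i2; x i2 i1; x i2 i2; XD; y i1 i1; YA; y i1 i2; y i2 i1; y i2 i2; YD] H 400%N.
have E22 : (YD * XD - YD * XD * (x i2 i1 * y i1 i2) * YD * XD) * mxprod x y i2 i2 = 1 /\
           mxprod x y i2 i2 * (YD * XD - YD * XD * (x i2 i1 * y i1 i2) * YD * XD) = 1.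
  by rewrite /mxprod sum2; split; engine hq [:: x i1 i1; XA; x i1 i2; x i2 i1; x i2 i2; XD; y i1 i1; YA; y i1 i2; y i2 i1; y i2 i2; YD] H 400%N.
split.
- by apply/unitrP; eexists; exact: E11.
- by apply/unitrP; eexists; exact: E22.
rewrite /sdet (inv_of E22.1 E22.2) -/XD -/YD /mxprod !sum2.
engine hq [:: x i1 i1; XA; x i1 i2; x i2 i1; x i2 i2; XD; y i1 i1; YA; y i1 i2; y i2 i1; y i2 i2; YD] H 400%N.
Qed.

Unset Implicit Arguments.

Theorem mainTheorem9 (k : fieldType) (q : k) (hq : q != 0)
    (hq2 : q ^+ 2 + 1 != 0) :
  (* R_Omega is superizable w.r.t. p(1)=0, p(2)=1 *)
      superizable (R_Omega q) par /\
      (* presentation of A(underline R_Omega): the FRT relations are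
         equivalent to the listed relations in every k-algebra *)
      (forall (A : algType k) (u : 'I_2 -> 'I_2 -> A),
          FRT_rel (super_R (R_Omega q) par) par u <-> GL_rel q u) /\
      (* the matrix super-coproduct u |-> u (x) u respects the relations *)
      (forall (B : algType k) (x y : 'I_2 -> 'I_2 -> B),
          GL_rel q x -> GL_rel q y -> supercomm par x y ->
          GL_rel q (mxprod x y)) /\
      (* the counit u |-> id respects the relations *)
      GL_rel q (@id2 k^o) /\
      (* antipode of GL^Omega_q(1|1) *)
      (forall (A : unitAlgType k) (u : 'I_2 -> 'I_2 -> A),
          GL_rel q u -> u i1 i1 \is a GRing.unit -> u i2 i2 \is a GRing.unit ->
          [/\ mxprod (antipode u) u = id2,
              mxprod u (antipode u) = id2,
              antipode u i1 i1 \is a GRing.unit,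
              antipode u i2 i2 \is a GRing.unit &
              GL_relP q (fun i j k l =>
                 (-1) ^+ ((par i + par j) * (par k + par l)) *:
                   (antipode u k l * antipode u i j))]) /\
      (* the super-determinant is central and even *)
      (forall (A : unitAlgType k) (u : 'I_2 -> 'I_2 -> A),
          GL_rel q u -> u i1 i1 \is a GRing.unit -> u i2 i2 \is a GRing.unit ->
          (forall i j, sdet u * u i j = u i j * sdet u) /\
          sdet (parity_inv par u) = sdet u) /\
      (* the super-determinant is group-like: Delta sdet = sdet (x) sdet *)
      (forall (B : unitAlgType k) (x y : 'I_2 -> 'I_2 -> B),
          GL_rel q x -> GL_rel q y ->
          x i1 i1 \is a GRing.unit -> x i2 i2 \is a GRing.unit ->
          y i1 i1 \is a GRing.unit -> y i2 i2 \is a GRing.unit ->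
          supercomm par x y ->
          [/\ mxprod x y i1 i1 \is a GRing.unit,
              mxprod x y i2 i2 \is a GRing.unit &
              sdet (mxprod x y) = sdet x * sdet y]) /\
      (* and eps(sdet) = 1 *)
      sdet (@id2 k) = 1.
Proof.
split; first exact: superiz.
split; first by move=> A u; split; [exact: FRT_to_GL | exact: GL_to_FRT].
split; first by move=> B x y; exact: coprod_ok.
split; first exact: counit_ok.
split; first by move=> A u; exact: antipode_ok.
split; first by move=> A u; exact: sdet_ok.
split; first by move=> B x y; exact: grouplike_ok.
exact: sdet_id2.
Qed.
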